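(* Let $\mathcal{X}$ be a connected $n$-premaniplex and $(\mathcal{Y},\eta)$ an $(n,m)$-voltage operator that preserves connectivity. Let $\Gamma$ be the set of automorphisms of $\mathcal{Y}$ that lift to $\mathcal{X}\rtimes_\eta\mathcal{Y}$, and $\tilde\Gamma$ the set of automorphisms of $\mathcal{X}\rtimes_\eta\mathcal{Y}$ that are lifts of elements of $\Gamma$. Then $\Gamma\le\operatorname{Aut}(\mathcal{Y})$ and $\tilde\Gamma\le\operatorname{Aut}(\mathcal{X}\rtimes_\eta\mathcal{Y})$ are subgroups, and there are an injective homomorphism $\iota:\operatorname{Aut}(\mathcal{X})\to\tilde\Gamma$ (given by $(x,y)\iota(\alpha)=(x\alpha,y)$) and a surjective homomorphism $\pi:\tilde\Gamma\to\Gamma$ (sending a lift of $\tau$ to $\tau$) with $\iota(\operatorname{Aut}(\mathcal{X}))=\ker\pi$. Consequently $\iota(\operatorname{Aut}(\mathcal{X}))\trianglelefteq\tilde\Gamma$, $\tilde\Gamma/\iota(\operatorname{Aut}(\mathcal{X}))\cong\Gamma$, and if $\mathcal{X}$ and $\mathcal{Y}$ are finite then $|\tilde\Gamma|=|\operatorname{Aut}(\mathcal{X})|\,|\Gamma|$.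
   Context: An $n$-premaniplex is an edge-coloured graph (semi-edges and parallel edges allowed) with colours $\{0,\dots,n-1\}$ such that every vertex (flag) is the start of exactly one dart of each colour, and for $|i-j|\ge2$ alternating $i,j$-paths of length 4 are closed; $x^i$ is the $i$-adjacent flag of $x$. $\mathcal{C}^n=\langle r_0,\dots,r_{n-1}\mid r_i^2,\ (r_ir_j)^2\ (|i-j|\ge2)\rangle$ acts on the left on flags by $r_ix=x^i$; automorphisms act on the right. For a flag $y$ of an $m$-premaniplex $\mathcal{Y}$ and $\omega\in\mathcal{C}^m$, $W_\omega(y)$ is the homotopy class of paths from $y$ whose colour sequence $i_1,\dots,i_k$ satisfies $r_{i_k}\cdots r_{i_1}=\omega$; these form the fundamental groupoid $\Pi(\mathcal{Y})$. A voltage assignment $\eta:\Pi(\mathcal{Y})\to\mathcal{C}^n$ satisfies $\eta(W_1W_2)=\eta(W_2)\eta(W_1)$; $(\mathcal{Y},\eta)$ is an $(n,m)$-voltage operator. $\mathcal{X}\rtimes_\eta\mathcal{Y}$ has flags $\mathcal{X}\times\mathcal{Y}$ and $(x,y)^i=(\eta(W_{r_i}(y))x,r_iy)$, $i\in\{0,\dots,m-1\}$. The operator preserves connectivity if $\mathcal{X}\rtimes_\eta\mathcal{Y}$ is connected whenever $\mathcal{X}$ is. $\tilde\tau\in\operatorname{Aut}(\mathcal{X}\rtimes_\eta\mathcal{Y})$ is a lift of $\tau\in\operatorname{Aut}(\mathcal{Y})$ if the $\mathcal{Y}$-coordinate of $(x,y)\tilde\tau$ is $y\tau$ for all $(x,y)$;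 $\tau$ lifts if it has a lift. Standing convention: $\mathcal{Y}$ has a spanning tree all of whose darts have trivial voltage. *)

(* Defs.v *)
From HB Require Import structures.
From Stdlib Require Import Relation_Operators.
From mathcomp Require Import all_boot.
From mathcomp Require Import boolp classical_sets functions cardinality.



Unset Printing Implicit Defensive.

Local Open Scope classical_set_scope.

(* The Coxeter group C^n = < r_0..r_{n-1} | r_i^2, (r_i r_j)^2, |i-j|>=2 > *)
(* realised as words over 'I_n modulo the congruence generated by the    *)
(* relators.  A word [:: i_1; ...; i_k] stands for r_{i_k} ... r_{i_1}   *)
(* (the element associated with a path of colour sequence i_1..i_k).     *)
(* Hence the product  elt(u) * elt(v)  is  elt(v ++ u).                  *)

Definition far {n : nat} (i j : 'I_n) : bool := (i + 2 <= j)%N || (j + 2 <= i)%N.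

Inductive cox_step {n : nat} : seq 'I_n -> seq 'I_n -> Prop :=
| cox_del_sq (u v : seq 'I_n) (i : 'I_n) :
    cox_step (u ++ [:: i; i] ++ v) (u ++ v)
| cox_del_comm (u v : seq 'I_n) (i j : 'I_n) : far i j ->
    cox_step (u ++ [:: i; j; i; j] ++ v) (u ++ v).

Definition coxeq {n : nat} : seq 'I_n -> seq 'I_n -> Prop :=
  clos_refl_sym_trans (seq 'I_n) (@cox_step n).

(* Premaniplexes.  Since every flag is the start of exactly one dart of *)
(* each colour, the coloured graph is the same thing as the family of   *)
(* involutions x |-> x^i (a fixed point being a semi-edge).             *)

Record premaniplex (n : nat) := Premaniplex {
  flag :> Type;
  adj : 'I_n -> flag -> flag;
  adjK : forall i, involutive (adj i);
  adj_far : forall (i j : 'I_n), far i j ->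
    forall x, adj j (adj i (adj j (adj i x))) = x
}.
Arguments flag {n} _.
Arguments adj {n} _ _ _.
Arguments Premaniplex {n} _ _ _ _.

(* endpoint of the path from x with colour sequence w, i.e. the left   *)
(* action  omega x  of the element omega represented by w              *)
Definition actw {F : Type} {n : nat} (ad : 'I_n -> F -> F) (w : seq 'I_n) (x : F) : F :=
  foldl (fun z i => ad i z) x w.

Definition connected_adj {F : Type} {n : nat} (ad : 'I_n -> F -> F) : Prop :=
  inhabited F /\ forall x y : F, exists w : seq 'I_n, actw ad w x = y.

Definition connected {n : nat} (X : premaniplex n) : Prop := connected_adj (adj X).

Definition is_aut {F : Type} {n : nat} (ad : 'I_n -> F -> F) (f : F -> F) : Prop :=
  bijective f /\ forall (i : 'I_n) (x : F), f (ad i x) = ad i (f x).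

Definition Aut_adj {F : Type} {n : nat} (ad : 'I_n -> F -> F) : set (F -> F) :=
  [set f | is_aut ad f].

(* Automorphisms act on the right: x(ab) = (xa)b. *)
Definition rmul {F : Type} (f g : F -> F) : F -> F := g \o f.

Definition is_subgroup {F : Type} (G H : set (F -> F)) : Prop :=
  [/\ H `<=` G, H id,
      (forall f g, H f -> H g -> H (rmul f g)) &
      (forall f, H f -> exists g, [/\ H g, rmul f g = id & rmul g f = id])].

(* Voltage operators.  The fundamental groupoid Pi(Y) consists of the  *)
(* classes W_omega(y), y a flag of Y and omega in C^m; W_omega(y) is    *)
(* represented by (y, w) with w any word representing omega.  The      *)
(* concatenation W_omega(y) W_omega'(omega y) is W_(omega' omega)(y),   *)
(* represented by (y, w ++ w').  A voltage assignment eta : Pi(Y) -> C^n*)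
(* must be well defined on classes and satisfy                          *)
(*   eta(W1 W2) = eta(W2) eta(W1).                                       *)

Record voltage_operator (n m : nat) := VoltageOperator {
  vY : premaniplex m;
  eta : vY -> seq 'I_m -> seq 'I_n;
  eta_wd : forall (y : vY) (w w' : seq 'I_m),
    coxeq w w' -> coxeq (eta y w) (eta y w');
  eta_anti : forall (y : vY) (w w' : seq 'I_m),
    coxeq (eta y (w ++ w')) (eta y w ++ eta (actw (adj vY) w y) w')
}.
Arguments vY {n m} _.
Arguments eta {n m} _ _ _.

Fixpoint walk_in {m : nat} {Y : premaniplex m} (T : Y -> 'I_m -> Prop)
    (y : Y) (w : seq 'I_m) : Prop :=
  if w is i :: w' then T y i /\ walk_in T (adj Y i y) w' else True.

(* Standing convention: Y has a spanning tree all of whose darts have  *)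
(* trivial voltage.  A spanning tree is a set T of darts, closed under *)
(* reversal, connecting all flags, and without non-backtracking closed *)
(* walks other than the trivial one (in a premaniplex a walk backtracks *)
(* exactly when two consecutive colours coincide).                     *)
Definition spanning_tree {m : nat} (Y : premaniplex m) (T : Y -> 'I_m -> Prop) : Prop :=
  [/\ (forall y i, T y i -> T (adj Y i y) i),
      (forall y y' : Y, exists w, walk_in T y w /\ actw (adj Y) w y = y') &
      (forall (y : Y) w, walk_in T y w -> sorted (fun a b : 'I_m => a != b) w ->
         actw (adj Y) w y = y -> w = [::])].

Definition tree_convention {n m : nat} (V : voltage_operator n m) : Prop :=
  exists T, spanning_tree (vY V) T /\ forall y i, T y i -> coxeq (eta V y [:: i]) [::].

Definition mix_adj {n m : nat} (X : premaniplex n) (V : voltage_operator n m)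
    (i : 'I_m) (p : X * vY V) : X * vY V :=
  (actw (adj X) (eta V p.2 [:: i]) p.1, adj (vY V) i p.2).

Definition preserves_connectivity {n m : nat} (V : voltage_operator n m) : Prop :=
  forall X : premaniplex n, connected X -> connected_adj (mix_adj X V).

Definition lift_of {n m : nat} {X : premaniplex n} {V : voltage_operator n m}
    (phi : X * vY V -> X * vY V) (tau : vY V -> vY V) : Prop :=
  forall p, (phi p).2 = tau p.2.

Definition Gamma {n m : nat} (X : premaniplex n) (V : voltage_operator n m) :
    set (vY V -> vY V) :=
  [set tau | is_aut (adj (vY V)) tau /\
     exists phi, is_aut (mix_adj X V) phi /\ lift_of phi tau].

Definition Gammat {n m : nat} (X : premaniplex n) (V : voltage_operator n m) :
    set (X * vY V -> X * vY V) :=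
  [set phi | is_aut (mix_adj X V) phi /\
     exists tau, Gamma X V tau /\ lift_of phi tau].

Definition iota_aut {n m : nat} (X : premaniplex n) (V : voltage_operator n m)
    (alpha : X -> X) : X * vY V -> X * vY V :=
  fun p => (alpha p.1, p.2).

Definition lcoset {F : Type} (K : set (F -> F)) (phi : F -> F) : set (F -> F) :=
  [set rmul phi k | k in K].

(* Main.v *)
Require Import Defs.
From HB Require Import structures.
From Stdlib Require Import Relation_Operators.
From mathcomp Require Import all_boot.
From mathcomp Require Import boolp classical_sets functions cardinality.
From mathcomp Require Import zify.

Local Open Scope classical_set_scope.
Local Open Scope card_scope.

Lemma actw_cons {F : Type} {n : nat} (ad : 'I_n -> F -> F) i w x :
  actw ad (i :: w) x = actw ad w (ad i x).
Proof. by []. Qed.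

Lemma actw_cat {F : Type} {n : nat} (ad : 'I_n -> F -> F) u v x :
  actw ad (u ++ v) x = actw ad v (actw ad u x).
Proof. by rewrite /actw foldl_cat. Qed.

Lemma actw_rcons {F : Type} {n : nat} (ad : 'I_n -> F -> F) w i x :
  actw ad (rcons w i) x = ad i (actw ad w x).
Proof. by rewrite -cats1 actw_cat. Qed.

Lemma actw_comm {F F' : Type} {n : nat} (ad : 'I_n -> F -> F) (ad' : 'I_n -> F' -> F')
  (g : F -> F') : (forall i x, g (ad i x) = ad' i (g x)) ->
  forall w x, g (actw ad w x) = actw ad' w (g x).
Proof. move=> H; elim=> // i w IH x; by rewrite !actw_cons IH H. Qed.

Lemma actw_rev {F : Type} {n : nat} (ad : 'I_n -> F -> F) :
  (forall i, involutive (ad i)) -> forall w x, actw ad (rev w) (actw ad w x) = x.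
Proof.
move=> H; elim=> // i w IH x.
by rewrite rev_cons actw_rcons actw_cons IH H.
Qed.

Lemma coxeq_actw {n : nat} (X : premaniplex n) (w w' : seq 'I_n) :
  coxeq w w' -> forall x, actw (adj X) w x = actw (adj X) w' x.
Proof.
elim=> [u v Hs | u | u v _ IH | u v t _ IH1 _ IH2] x //.
- case: Hs => [u1 v1 i | u1 v1 i j Hf]; rewrite !actw_cat; congr (actw _ v1 _).
  + by rewrite /actw /= adjK.
  + by rewrite /actw /= adj_far.
- by rewrite IH1 IH2.
Qed.

Lemma is_aut_id {F : Type} {n : nat} (ad : 'I_n -> F -> F) : is_aut ad id.
Proof. by split=> //; exists id. Qed.

Lemma is_aut_rmul {F : Type} {n : nat} (ad : 'I_n -> F -> F) f g :
  is_aut ad f -> is_aut ad g -> is_aut ad (rmul f g).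
Proof.
move=> [bf cf] [bg cg]; split; first exact: bij_comp.
by move=> i x; rewrite /rmul /= cf cg.
Qed.

Lemma is_aut_inv {F : Type} {n : nat} (ad : 'I_n -> F -> F) f :
  is_aut ad f -> exists g, [/\ is_aut ad g, cancel f g & cancel g f].
Proof.
move=> [[g fg gf] cf]; exists g; split=> //; split; first by exists f.
by move=> i x; rewrite -{1}(gf x) -cf fg.
Qed.

Lemma sig_eq {T : Type} (P : T -> Prop) (a b : {x | P x}) : sval a = sval b -> a = b.
Proof. case: a b => [a pa] [b pb] /= eab; exact: eq_exist. Qed.

Lemma rmul_idP {F : Type} (f g : F -> F) : rmul f g = id <-> cancel f g.
Proof. split=> [H x|H]; first by have := congr1 (fun h => h x) H. by apply: funext. Qed.


Section Comp.
Variables (n : nat) (X : premaniplex n).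

Definition XX_adj (i : 'I_n) (p : X * X) : X * X := (adj X i p.1, adj X i p.2).

Definition comp_flag (b : X * X) := {p : X * X | exists w, actw XX_adj w b = p}.

Lemma comp_adj_proof b i (c : comp_flag b) :
  exists w, actw XX_adj w b = XX_adj i (sval c).
Proof. case: c => p /= [w e]; exists (rcons w i); by rewrite actw_rcons e. Qed.

Definition comp_adj b i (c : comp_flag b) : comp_flag b :=
  exist _ (XX_adj i (sval c)) (comp_adj_proof b i c).

Lemma comp_adjK b i : involutive (comp_adj b i).
Proof. move=> c; apply: sig_eq; rewrite /= /XX_adj /=; case: (sval c) => p1 p2 /=; by rewrite !adjK. Qed.

Lemma comp_far b (i j : 'I_n) : far i j ->
  forall x, comp_adj b j (comp_adj b i (comp_adj b j (comp_adj b i x))) = x.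
Proof. move=> f c; apply: sig_eq; rewrite /= /XX_adj /=; case: (sval c) => p1 p2 /=; by rewrite !adj_far. Qed.

Definition compP b : premaniplex n := Premaniplex (comp_flag b) (comp_adj b) (comp_adjK b) (comp_far b).

Lemma comp_val b w (c : compP b) : sval (actw (adj (compP b)) w c) = actw XX_adj w (sval c).
Proof. by apply: (actw_comm (adj (compP b)) XX_adj (fun c : compP b => sval c)). Qed.

Definition comp_base b : compP b := exist _ b (ex_intro _ [::] erefl).

Lemma comp_conn b : connected (compP b).
Proof.
split; first exact: (inhabits (comp_base b)).
move=> c d.
case: (svalP c) => w1 e1; case: (svalP d) => w2 e2.
exists (rev w1 ++ w2); apply: sig_eq.
rewrite comp_val actw_cat -e1 -e2 actw_rev //.
by move=> i [p1 p2]; rewrite /XX_adj /= !adjK.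
Qed.

End Comp.
Lemma arith_lt a b u v : u < a -> v < b -> u + a * v < a * b.
Proof. move=> h1 h2. nia. Qed.
Lemma arith_inj a u1 u2 v1 v2 : u1 < a -> u2 < a -> u1 + a * v1 = u2 + a * v2 -> u1 = u2 /\ v1 = v2.
Proof.
move=> h1 h2 e.
have ev : v1 = v2.
  have := congr1 (fun z => z %/ a) e => /=.
  have a0 : 0 < a by case: a h1 {e h2}.
  by rewrite ![a * _]mulnC ![_ + _ * a]addnC !divnMDl // !divn_small ?addn0.
by split => //; move: e; rewrite ev; lia.
Qed.


Section Mix.
Variables (n m : nat) (V : voltage_operator n m).

Lemma mix_map (X1 X2 : premaniplex n) (g : X1 -> X2) :
  (forall i x, g (adj X1 i x) = adj X2 i (g x)) ->
  forall w (p : X1 * vY V),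
  (g (actw (mix_adj X1 V) w p).1, (actw (mix_adj X1 V) w p).2) =
  actw (mix_adj X2 V) w (g p.1, p.2).
Proof.
move=> Hg w p.
apply: (actw_comm (mix_adj X1 V) (mix_adj X2 V) (fun p : X1 * vY V => (g p.1, p.2))).
move=> i [x y]; rewrite /mix_adj /=; congr (_, _).
exact: actw_comm.
Qed.

Lemma iota_is_aut (X : premaniplex n) a : is_aut (adj X) a -> is_aut (mix_adj X V) (iota_aut X V a).
Proof.
move=> [[b ab ba] ca]; split.
  by exists (iota_aut X V b) => -[x y]; rewrite /iota_aut /= ?ab ?ba.
move=> i [x y]; rewrite /mix_adj /iota_aut /=; congr (_, _).
exact: actw_comm.
Qed.

Lemma kernel_char (X : premaniplex n) (Vconv : tree_convention V)
  (Xconn : connected X) (Vpres : preserves_connectivity V) phi :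
  is_aut (mix_adj X V) phi -> lift_of phi id ->
  exists a, is_aut (adj X) a /\ phi = iota_aut X V a.
Proof.
move=> [[g pg gp] cphi] lphi.
have [[[x0 y0]] _] := Vpres X Xconn.
pose f := fun x => (phi (x, y0)).1.
have Hy0 : forall x, phi (x, y0) = (f x, y0).
  by move=> x; rewrite [LHS]surjective_pairing lphi.
have [T [[Tsym Tconn Tacyc] Teta]] := Vconv.
have Hw : forall w y1, walk_in T y1 w -> (forall x, phi (x, y1) = (f x, y1)) ->
    forall x, phi (x, actw (adj (vY V)) w y1) = (f x, actw (adj (vY V)) w y1).
  elim=> // i w IH y1 /= [Ti wT] H1.
  apply: IH => // x.
  have := cphi i (x, y1); rewrite H1 /mix_adj /=.
  by rewrite !(coxeq_actw X _ _ (Teta _ _ Ti)) /= => ->.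
have Hall : forall y x, phi (x, y) = (f x, y).
  move=> y; have [w [wT <-]] := Tconn y0 y.
  exact: Hw.
exists f; split; last first.
  by apply: funext => -[x y]; rewrite Hall.
split.
  exists (fun x => (g (x, y0)).1).
    by move=> x; rewrite -Hy0 pg.
  move=> x; have e2 : (g (x, y0)).2 = y0.
    by rewrite -(lphi (g (x, y0))) gp.
  rewrite /f; have -> : ((g (x, y0)).1, y0) = g (x, y0) by rewrite [RHS]surjective_pairing e2.
  by rewrite gp.
move=> j x.
pose b := (x, f x).
have [_ Cc] := Vpres (compP n X b) (comp_conn n X b).
have [w e] := Cc (comp_base n X b, y0) (comp_adj n X b j (comp_base n X b), y0).
have e1 := mix_map (compP n X b) X (fun c => (sval c).1) (fun _ _ => erefl) w (comp_base n X b, y0).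
have e2 := mix_map (compP n X b) X (fun c => (sval c).2) (fun _ _ => erefl) w (comp_base n X b, y0).
rewrite e /= in e1 e2.
have := actw_comm (mix_adj X V) (mix_adj X V) phi cphi w (x, y0).
rewrite -e1 (Hy0 x) -e2 Hy0.
by case.
Qed.

End Mix.


Definition pick {T : Type} (d : T) (P : T -> Prop) : T :=
  match pselect (exists x, P x) with left h => projT1 (cid h) | right _ => d end.

Lemma pickP {T : Type} (d : T) (P : T -> Prop) x : P x -> P (pick d P).
Proof.
rewrite /pick; case: pselect => [h _|h Px]; first exact: (projT2 (cid h)).
by exfalso; apply: h; exists x.
Qed.

Theorem proposition6p7 (n m : nat) (X : premaniplex n) (V : voltage_operator n m)
  (Vconv : tree_convention V)
  (Xconn : connected X) (Vpres : preserves_connectivity V) :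
  let AutX := Aut_adj (adj X) in
  let AutY := Aut_adj (adj (vY V)) in
  let AutM := Aut_adj (mix_adj X V) in
  let G := Gamma X V in
  let Gt := Gammat X V in
  let K := iota_aut X V @` AutX in
  [/\ is_subgroup AutY G /\ is_subgroup AutM Gt,
      (* iota : Aut(X) -> tilde Gamma is an injective homomorphism *)
      [/\ forall a, AutX a -> Gt (iota_aut X V a),
          (forall a b, AutX a -> AutX b -> iota_aut X V (rmul a b) = rmul (iota_aut X V a) (iota_aut X V b)) &
          (forall a b, AutX a -> AutX b -> iota_aut X V a = iota_aut X V b -> a = b)],
      (* pi : tilde Gamma -> Gamma sends a lift of tau to tau, is a surjective
         homomorphism, and its kernel is iota(Aut(X)) *)
      (exists pi : (X * vY V -> X * vY V) -> (vY V -> vY V),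
        [/\ forall phi, Gt phi -> lift_of phi (pi phi),
            forall phi, Gt phi -> G (pi phi),
            (forall phi psi, Gt phi -> Gt psi -> pi (rmul phi psi) = rmul (pi phi) (pi psi)),
            (forall tau, G tau -> exists phi, Gt phi /\ pi phi = tau) &
            K = [set phi | Gt phi /\ pi phi = id]]) /\
      (* iota(Aut(X)) is normal in tilde Gamma *)
      (forall phi psi k, Gt phi -> Gt psi -> rmul phi psi = id -> K k ->
          K (rmul (rmul psi k) phi)),
      (* tilde Gamma / iota(Aut(X)) is isomorphic to Gamma *)
      (exists f : set (X * vY V -> X * vY V) -> (vY V -> vY V),
        set_bij [set lcoset K phi | phi in Gt] G f /\
        forall phi psi, Gt phi -> Gt psi ->
          f (lcoset K (rmul phi psi)) = rmul (f (lcoset K phi)) (f (lcoset K psi))) &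
      (* finite case: |tilde Gamma| = |Aut(X)| |Gamma| *)
      (finite_set [set: flag X] -> finite_set [set: flag (vY V)] ->
        forall a b : nat, AutX #= `I_a -> G #= `I_b -> Gt #= `I_(a * b))].
Proof.
move=> AutX AutY AutM G Gt K.
have [[[x0 y0]] _] := Vpres X Xconn.
pose pi := fun (phi : X * vY V -> X * vY V) y => (phi (x0, y)).2.
have liftpi : forall phi tau, lift_of phi tau -> pi phi = tau.
  by move=> phi tau l; apply: funext => y; rewrite /pi l.
have GE : forall tau, G tau <-> is_aut (adj (vY V)) tau /\
    exists phi, is_aut (mix_adj X V) phi /\ lift_of phi tau by [].
have GtE : forall phi, Gt phi <-> is_aut (mix_adj X V) phi /\
    exists tau, G tau /\ lift_of phi tau by [].
have Gid : G id.
  by apply/GE; split; [exact: is_aut_id | exists id; split; [exact: is_aut_id|]].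
have Gtid : Gt id by apply/GtE; split; [exact: is_aut_id | exists id].
have Gmul : forall f g, G f -> G g -> G (rmul f g).
  move=> f g /GE [af [phi [aphi lphi]]] /GE [ag [psi [apsi lpsi]]].
  apply/GE; split; first exact: is_aut_rmul.
  exists (rmul phi psi); split; first exact: is_aut_rmul.
  by move=> p; rewrite /rmul /= lpsi lphi.
have Gtmul : forall f g, Gt f -> Gt g -> Gt (rmul f g).
  move=> f g /GtE [af [tf [Gf lf]]] /GtE [ag [tg [Gg lg]]].
  apply/GtE; split; first exact: is_aut_rmul.
  exists (rmul tf tg); split; first exact: Gmul.
  by move=> p; rewrite /rmul /= lg lf.
have lift_inv : forall (phi phi' : X * vY V -> X * vY V) (tau tau' : vY V -> vY V),
    lift_of phi tau -> cancel phi phi' -> cancel phi' phi ->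
    cancel tau tau' -> cancel tau' tau -> lift_of phi' tau'.
  move=> phi phi' tau tau' l c1 c2 c3 c4 p.
  by rewrite -{2}(c2 p) l c3.
have Ginv : forall f, G f -> exists g, [/\ G g, cancel f g & cancel g f].
  move=> f /GE [af [phi [aphi lphi]]].
  have [g [ag fg gf]] := is_aut_inv _ _ af.
  have [psi [apsi pp1 pp2]] := is_aut_inv _ _ aphi.
  exists g; split => //; apply/GE; split => //; exists psi; split => //.
  exact: (lift_inv phi _ f).
have Gtinv : forall f, Gt f -> exists g, [/\ Gt g, cancel f g & cancel g f].
  move=> phi /GtE [aphi [f [Gf lphi]]].
  have [g [Gg fg gf]] := Ginv f Gf.
  have [psi [apsi pp1 pp2]] := is_aut_inv _ _ aphi.
  exists psi; split => //; apply/GtE; split => //; exists g; split => //.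
  exact: (lift_inv phi _ f).
have piLift : forall phi, Gt phi -> lift_of phi (pi phi).
  by move=> phi /GtE [_ [tau [_ l]]]; rewrite (liftpi _ _ l).
have piG : forall phi, Gt phi -> G (pi phi).
  by move=> phi /GtE [_ [tau [Gtau l]]]; rewrite (liftpi _ _ l).
have pimul : forall phi psi, Gt phi -> Gt psi -> pi (rmul phi psi) = rmul (pi phi) (pi psi).
  move=> phi psi _ Gpsi; apply: funext => y.
  exact: (piLift psi Gpsi (phi (x0, y))).
have piid : pi id = id by apply: funext.
have piK : forall phi, Gt phi -> pi phi = id -> K phi.
  move=> phi Gphi e; have l := piLift _ Gphi; rewrite e in l.
  have [aphi _] := proj1 (GtE phi) Gphi.
  have [a [aa ->]] := kernel_char n m V X Vconv Xconn Vpres phi aphi l.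
  by exists a.
have KGt : forall k, K k -> Gt k /\ pi k = id.
  move=> _ [a aa <-]; split; last by apply: funext.
  apply/GtE; split; first exact: iota_is_aut.
  by exists id.
have lcosetE : forall phi, Gt phi -> lcoset K phi = [set chi | Gt chi /\ pi chi = pi phi].
  move=> phi Gphi; apply/seteqP; split => chi.
  - case=> k Kk <-; have [Gk pk] := KGt _ Kk; split; first exact: Gtmul.
    by rewrite pimul // pk.
  - case=> Gchi e; have [psi [Gpsi c1 c2]] := Gtinv _ Gphi.
    exists (rmul psi chi).
      apply: (piK); first exact: Gtmul.
      by rewrite pimul // e -pimul // (proj2 (rmul_idP _ _) c2) piid.
    by apply: funext => x; rewrite /rmul /= c1.
split.
- split; split => //.
  + by move=> tau /GE [].
  + move=> f Gf; have [g [Gg fg gf]] := Ginv f Gf.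
    by exists g; split => //; apply/rmul_idP.
  + by move=> phi /GtE [].
  + move=> f Gf; have [g [Gg fg gf]] := Gtinv f Gf.
    by exists g; split => //; apply/rmul_idP.
- split.
  + move=> a aa; have : K (iota_aut X V a) by exists a.
    by move=> /KGt [].
  + by move=> a b _ _.
  + move=> a b _ _ e; apply: funext => x.
    by have := congr1 (fun h => (h (x, y0)).1) e.
- split.
  + exists pi; split => //.
    * move=> tau Gtau; have [_ [phi [aphi l]]] := proj1 (GE tau) Gtau.
      exists phi; split; last exact: liftpi.
      by apply/GtE; split => //; exists tau.
    * apply/seteqP; split => phi; first by move=> /KGt.
      by move=> [Gphi e]; exact: piK.
  + move=> phi psi k Gphi Gpsi e Kk; have [Gk pk] := KGt _ Kk.
    apply: (piK); first by apply: (Gtmul) => //; apply: (Gtmul).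
    rewrite (pimul (rmul psi k) phi) ?(pimul psi k) //; last exact: Gtmul.
    rewrite pk.
    have c : cancel (pi phi) (pi psi).
      by apply/rmul_idP; rewrite -pimul // e piid.
    have [[bp _] _] := proj1 (GE _) (piG _ Gphi).
    apply/rmul_idP => y /=.
    exact: ((bij_can_sym bp (pi psi)).2 c y).
- pose f := fun C : set (X * vY V -> X * vY V) => pi (pick id C).
  have fE : forall phi, Gt phi -> f (lcoset K phi) = pi phi.
    move=> phi Gphi; have : lcoset K phi phi.
      by exists id => //; exists id; [exact: is_aut_id | apply: funext => -[]].
    move=> /(pickP id); rewrite (lcosetE _ Gphi) => -[_ e].
    by rewrite /f e.
  exists f; split.
    split.
    + by move=> _ [phi Gphi <-]; rewrite fE //; exact: piG.
    + move=> C1 C2; rewrite !in_setE => -[phi1 G1 <-] [phi2 G2 <-].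
      by rewrite !fE // => e; rewrite !lcosetE // e.
    + move=> tau Gtau; have [_ [phi [aphi l]]] := proj1 (GE tau) Gtau.
      have Gphi : Gt phi by apply/GtE; split => //; exists tau.
      exists (lcoset K phi); first by exists phi.
      by rewrite fE // (liftpi _ _ l).
  move=> phi psi G1 G2; rewrite !fE //; [exact: pimul | exact: Gtmul].
- move=> _ _ a b /card_set_bijP [gA [gAf gAi gAs]] /card_set_bijP [gG [gGf gGi gGs]].
  apply/card_set_bijP.
  pose s := fun tau => pick id (fun phi => Gt phi /\ pi phi = tau).
  have sP : forall tau, G tau -> Gt (s tau) /\ pi (s tau) = tau.
    move=> tau Gtau; have [_ [phi [aphi l]]] := proj1 (GE tau) Gtau.
    apply: (pickP id (fun phi => Gt phi /\ pi phi = tau) phi); split; last exact: liftpi.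
    by apply/GtE; split => //; exists tau.
  pose inv := fun phi => pick id (fun psi => [/\ Gt psi, cancel phi psi & cancel psi phi]).
  have invP : forall phi, Gt phi -> [/\ Gt (inv phi), cancel phi (inv phi) & cancel (inv phi) phi].
    by move=> phi Gphi; have [psi H] := Gtinv _ Gphi; exact: (pickP id (fun psi => [/\ Gt psi, cancel phi psi & cancel psi phi]) psi H).
  pose kappa := fun (chi : X * vY V -> X * vY V) x => (chi (x, y0)).1.
  have kappaK : forall k, K k -> AutX (kappa k) /\ iota_aut X V (kappa k) = k.
    by move=> _ [a0 aa <-]; split => //; apply: funext => -[].
  pose kk := fun phi => rmul (inv (s (pi phi))) phi.
  have kkP : forall phi, Gt phi -> K (kk phi) /\ phi = rmul (s (pi phi)) (kk phi).
    move=> phi Gphi; rewrite /kk; set sp := s (pi phi).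
    have [Gs ps] := sP _ (piG _ Gphi); rewrite -/sp in Gs ps.
    have [Gi c1 c2] := invP _ Gs.
    split; last by apply: funext => x; rewrite /rmul /= c1.
    apply: (piK); first exact: Gtmul.
    rewrite (pimul (inv sp) phi) // -ps -pimul //.
    by rewrite (proj2 (rmul_idP _ _) c2) piid.
  have ltA : forall phi, Gt phi -> (gA (kappa (kk phi)) < a)%N.
    by move=> phi Gphi; exact: (gAf _ (proj1 (kappaK _ (proj1 (kkP _ Gphi))))).
  have ltG : forall phi, Gt phi -> (gG (pi phi) < b)%N.
    by move=> phi Gphi; exact: (gGf _ (piG _ Gphi)).
  exists (fun phi => gA (kappa (kk phi)) + a * gG (pi phi)); split.
  + move=> phi Gphi /=; exact: arith_lt (ltA _ Gphi) (ltG _ Gphi).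
  + move=> phi psi; rewrite !in_setE => Gphi Gpsi e.
    have [e1 e2] := arith_inj _ _ _ _ _ (ltA _ Gphi) (ltA _ Gpsi) e.
    have ep : pi phi = pi psi.
      by apply: gGi => //; rewrite in_setE; exact: piG.
    have ek : kk phi = kk psi.
      have [K1 _] := kkP _ Gphi; have [K2 _] := kkP _ Gpsi.
      rewrite -(proj2 (kappaK _ K1)) -(proj2 (kappaK _ K2)); congr (iota_aut X V _).
      by apply: gAi => //; rewrite in_setE; exact: (proj1 (kappaK _ _)).
    rewrite (proj2 (kkP _ Gphi)) (proj2 (kkP _ Gpsi)).
    by rewrite ep ek.
  + move=> k /= hk.
    have a0 : (0 < a)%N by case: a hk {gAf gAi gAs ltA} => //; rewrite mul0n.
    have [alpha aa ea] := gAs (k %% a)%N (ltn_pmod k a0).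
    have [tau Gtau eb] := gGs (k %/ a)%N (ltac:(by rewrite /= ltn_divLR // mulnC)).
    have [Gs ps] := sP _ Gtau; have [Gi c1 c2] := invP _ Gs.
    have Ka : K (iota_aut X V alpha) by exists alpha.
    have [GKa pKa] := KGt _ Ka.
    pose phi := rmul (s tau) (iota_aut X V alpha).
    have Gphi : Gt phi by exact: Gtmul.
    have pphi : pi phi = tau by rewrite /phi pimul // pKa ps.
    exists phi; first by [].
    have ekk : kk phi = iota_aut X V alpha.
      rewrite /kk pphi; apply: funext => x; by rewrite /phi /rmul /= c2.
    rewrite ekk pphi.
    have -> : kappa (iota_aut X V alpha) = alpha by [].
    by rewrite ea eb addnC mulnC -divn_eq.
Qed.
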